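(* For all integers $m\ge 0$ and $n\ge 1$, $$\int_0^{\pi/2}x^{2m}\cos^{2n}(x)\,dx=(2m)!\,\frac{\binom{2n}{n}}{4^n}\sum_{j=0}^m\frac{(-1)^j\,\zeta_n^{\star}(\{2\}_j)}{2^{2j}(2m-2j+1)!}\left(\frac{\pi}{2}\right)^{2m-2j+1}.$$
   Context: For integers $n\ge1$ and $j\ge0$, the multiple harmonic star sum of depth $j$ and weight $2j$ is $\zeta_n^{\star}(\{2\}_j)=\sum_{n\ge k_1\ge\dots\ge k_j\ge1}\prod_{i=1}^j\frac{1}{k_i^2}$, with $\zeta_n^{\star}(\{2\}_0)=1$. *)

(* Defs.v *)
From Stdlib Require Import Reals.
From Coquelicot Require Import Coquelicot.
Open Scope R_scope.

(* zeta_star n j = sum_{n >= k_1 >= ... >= k_j >= 1} prod_i 1/k_i^2,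
   defined by peeling off the outermost index k_1 = k (1 <= k <= n):
   zeta_star n 0 = 1,
   zeta_star n (j+1) = sum_{k=1}^{n} (1/k^2) * zeta_star k j. *)
Fixpoint zeta_star (n j : nat) : R :=
  match j with
  | O => 1
  | S j' => sum_n_m (fun k => / (INR k) ^ 2 * zeta_star k j') 1 n
  end.

(* Main.v *)
Require Import Defs.
From Stdlib Require Import Reals Factorial Lia Lra Arith.
From Coquelicot Require Import Coquelicot.
Open Scope R_scope.
Definition Ii (m n : nat) : R := RInt (fun x => x ^ (2 * m) * cos x ^ (2 * n)) 0 (PI / 2).

Lemma Ii_cont m n x : continuous (fun x => x ^ (2 * m) * cos x ^ (2 * n)) x.
Proof. apply (@ex_derive_continuous R_AbsRing R_NormedModule). auto_derive. trivial. Qed.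

Lemma Ii_is m n : is_RInt (fun x => x ^ (2 * m) * cos x ^ (2 * n)) 0 (PI / 2) (Ii m n).
Proof. unfold Ii. apply (@RInt_correct R_CompleteNormedModule). apply (@ex_RInt_continuous R_CompleteNormedModule). intros; apply Ii_cont. Qed.

Lemma Hder m p x : is_derive (fun x => INR (2*m+2) * x^(2*m+1) * cos x^(2*p+2) + x^(2*m+2) * (INR (2*p+2) * cos x ^(2*p+1) * sin x)) x
  (INR ((2*m+1)*(2*m+2)) * (x^(2*m)*cos x^(2*(S p))) - INR ((2*p+2)*(2*p+1)) * (x^(2*(S m)) * cos x^(2*p)) + INR (4*(p+1)*(p+1)) * (x^(2*(S m)) * cos x^(2*(S p)))).
Proof.
replace (2 * S m)%nat with (2*m+2)%nat by lia.
replace (2 * S p)%nat with (2*p+2)%nat by lia.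
auto_derive. 1: trivial.
replace (m + (m+0))%nat with (2*m)%nat by lia.
replace (p + (p+0))%nat with (2*p)%nat by lia.
replace (Nat.pred (2*m+1)) with (2*m)%nat by lia.
replace (Nat.pred (2*m+2)) with (2*m+1)%nat by lia.
replace (Nat.pred (2*p+1)) with (2*p)%nat by lia.
replace (Nat.pred (2*p+2)) with (2*p+1)%nat by lia.
rewrite !pow_add. repeat rewrite ?plus_INR, ?mult_INR. simpl INR.
set (A := x ^ (2*m)). set (B := cos x ^ (2*p)).
assert (Hs : sin x ^ 2 = 1 - cos x ^ 2). { rewrite <- (sin2_cos2 x). unfold Rsqr. ring. }
ring_simplify. rewrite Hs. ring.
Qed.

Lemma recB m p :
  INR ((2*m+1)*(2*m+2)) * Ii m (S p) - INR ((2*p+2)*(2*p+1)) * Ii (S m) p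
  + INR (4*(p+1)*(p+1)) * Ii (S m) (S p) = 0.
Proof.
set (H := fun x => INR (2*m+2) * x^(2*m+1) * cos x^(2*p+2) + x^(2*m+2) * (INR (2*p+2) * cos x ^(2*p+1) * sin x)).
set (g := fun x => INR ((2*m+1)*(2*m+2)) * (x^(2*m)*cos x^(2*(S p))) - INR ((2*p+2)*(2*p+1)) * (x^(2*(S m)) * cos x^(2*p)) + INR (4*(p+1)*(p+1)) * (x^(2*(S m)) * cos x^(2*(S p)))).
assert (E1 : is_RInt g 0 (PI/2) (minus (H (PI/2)) (H 0))).
{ apply (@is_RInt_derive R_CompleteNormedModule).
  - intros. apply Hder.
  - intros. unfold g. apply (@ex_derive_continuous R_AbsRing R_NormedModule). auto_derive. trivial. }
assert (E2 : is_RInt g 0 (PI/2) (plus (minus (scal (INR ((2*m+1)*(2*m+2))) (Ii m (S p))) (scal (INR ((2*p+2)*(2*p+1))) (Ii (S m) p))) (scal (INR (4*(p+1)*(p+1))) (Ii (S m) (S p))))).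
{ eapply is_RInt_ext. 2: apply (@is_RInt_plus R_NormedModule); [apply (@is_RInt_minus R_NormedModule); apply (@is_RInt_scal R_NormedModule)|apply (@is_RInt_scal R_NormedModule)]; apply Ii_is.
  intros. reflexivity. }
apply (@is_RInt_unique R_CompleteNormedModule) in E1. apply (@is_RInt_unique R_CompleteNormedModule) in E2. pose proof (eq_trans (eq_sym E2) E1) as E.
unfold H, minus, plus, opp, scal, mult in E; cbn -[INR Nat.mul Nat.add pow Ii cos sin PI Rdiv] in E.
rewrite cos_PI2 in E. rewrite !pow_i in E by lia. lra.
Qed.

Lemma wallisB p : INR (2*p+2) * Ii 0 (S p) - INR (2*p+1) * Ii 0 p = 0.
Proof.
set (H := fun x => cos x ^ (2*p+1) * sin x).
set (g := fun x => INR (2*p+2) * (x^(2*0)*cos x^(2*(S p))) - INR (2*p+1) * (x^(2*0) * cos x^(2*p))).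
assert (E1 : is_RInt g 0 (PI/2) (minus (H (PI/2)) (H 0))).
{ apply (@is_RInt_derive R_CompleteNormedModule).
  - intros. unfold H, g. auto_derive. 1: trivial.
    replace (p + (p+0))%nat with (2*p)%nat by lia.
    replace (Nat.pred (2*p+1)) with (2*p)%nat by lia.
    replace (2 * S p)%nat with (2*p+2)%nat by lia.
    rewrite !pow_add. repeat rewrite ?plus_INR, ?mult_INR. simpl INR.
    set (B := cos x ^ (2*p)).
    assert (Hs : sin x ^ 2 = 1 - cos x ^ 2). { rewrite <- (sin2_cos2 x). unfold Rsqr. ring. }
    replace (2*0)%nat with 0%nat by reflexivity. ring_simplify. rewrite Hs. ring.
  - intros. unfold g. apply (@ex_derive_continuous R_AbsRing R_NormedModule). auto_derive. trivial. }
assert (E2 : is_RInt g 0 (PI/2) (minus (scal (INR (2*p+2)) (Ii 0 (S p))) (scal (INR (2*p+1)) (Ii 0 p)))).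
{ eapply is_RInt_ext. 2: apply (@is_RInt_minus R_NormedModule); apply (@is_RInt_scal R_NormedModule); apply Ii_is.
  intros. reflexivity. }
apply (@is_RInt_unique R_CompleteNormedModule) in E1. apply (@is_RInt_unique R_CompleteNormedModule) in E2. pose proof (eq_trans (eq_sym E2) E1) as E.
unfold H, minus, plus, opp, scal, mult in E; cbn -[INR Nat.mul Nat.add pow Ii cos sin PI Rdiv] in E.
rewrite cos_PI2, sin_0 in E. rewrite !pow_i in E by lia. lra.
Qed.

Lemma base0 m : Ii m 0 = (PI/2) ^ (2*m+1) / INR (2*m+1).
Proof.
unfold Ii. apply (@is_RInt_unique R_CompleteNormedModule).
replace ((PI/2) ^ (2*m+1) / INR (2*m+1)) with (minus ((fun x => x^(2*m+1) / INR (2*m+1)) (PI/2)) ((fun x => x^(2*m+1) / INR (2*m+1)) 0)).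
2: { unfold minus, plus, opp; cbn -[INR Nat.mul Nat.add pow PI Rdiv]. rewrite (pow_i (2*m+1)) by lia. field. apply not_0_INR. lia. }
apply (@is_RInt_derive R_CompleteNormedModule (fun x => x^(2*m+1) / INR (2*m+1))).
- intros. auto_derive. 1: trivial.
  replace (m + (m+0))%nat with (2*m)%nat by lia. replace (Nat.pred (2*m+1)) with (2*m)%nat by lia. replace (2*0)%nat with 0%nat by reflexivity. rewrite pow_O. field. apply not_0_INR; lia.
- intros. apply Ii_cont.
Qed.
Lemma sum_lin (u v : nat -> R) c k :
  sum_n_m (fun j => u j + c * v j) 0 k = sum_n_m u 0 k + c * sum_n_m v 0 k.
Proof.
induction k.
- rewrite !sum_n_n. reflexivity.
- rewrite !sum_n_Sm by lia. rewrite IHk. unfold plus; simpl. ring.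
Qed.

Lemma sum_zero (u : nat -> R) a k : (forall j, (a <= j <= k)%nat -> u j = 0) -> sum_n_m u a k = 0.
Proof.
intros H. destruct (le_lt_dec a k) as [h|h].
2: { rewrite sum_n_m_zero by lia. reflexivity. }
induction k.
- assert (a = 0)%nat by lia. subst. rewrite sum_n_n. apply H; lia.
- destruct (Nat.eq_dec a (S k)).
  + subst. rewrite sum_n_n. apply H; lia.
  + rewrite sum_n_Sm by lia. rewrite IHk; [| intros; apply H; lia | lia].
    rewrite H by lia. unfold plus; simpl. ring.
Qed.

Lemma zeta_0 j : zeta_star 0 (S j) = 0.
Proof. simpl. rewrite sum_n_m_zero by lia. reflexivity. Qed.

Lemma zeta_S p j : zeta_star (S p) (S j) = zeta_star p (S j) + / INR (S p) ^ 2 * zeta_star (S p) j.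
Proof. simpl zeta_star at 1. rewrite sum_n_Sm by lia. reflexivity. Qed.

Definition fterm m n j := (-1) ^ j * zeta_star n j
      / (2 ^ (2 * j) * INR (fact (2 * m - 2 * j + 1)))
      * (PI / 2) ^ (2 * m - 2 * j + 1).
Definition Ss m n := sum_n_m (fterm m n) 0 m.
Definition an n := Binomial.C (2 * n) n / 4 ^ n.
Definition G m n := INR (fact (2 * m)) * an n * Ss m n.

Lemma fact_nz k : INR (fact k) <> 0.
Proof. apply not_0_INR. apply fact_neq_0. Qed.

Lemma Ss_0 m : Ss m 0 = (PI/2) ^ (2*m+1) / INR (fact (2*m+1)).
Proof.
unfold Ss. rewrite sum_Sn_m by lia. rewrite sum_zero.
- unfold fterm. unfold plus; simpl. simpl zeta_star. rewrite Nat.sub_0_r. simpl pow. field. apply fact_nz.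
- intros j Hj. destruct j as [|j]; [lia|]. unfold fterm. rewrite zeta_0. field.
  split; [apply fact_nz| apply pow_nonzero; lra].
Qed.

Lemma Ss_n0 n : Ss 0 n = PI / 2.
Proof. unfold Ss. rewrite sum_n_n. unfold fterm. simpl. field. Qed.

Lemma recA m p : Ss (S m) (S p) = Ss (S m) p - Ss m (S p) / (4 * INR (S p) ^ 2).
Proof.
unfold Ss. rewrite !(sum_Sn_m _ 0 (S m)) by lia. rewrite <- !sum_n_m_S.
rewrite (sum_n_m_ext (fun j => fterm (S m) (S p) (S j))
   (fun j => fterm (S m) p (S j) + (- / (4 * INR (S p) ^ 2)) * fterm m (S p) j)).
- rewrite sum_lin. set (s1 := sum_n_m (fun j => fterm (S m) p (S j)) 0 m). set (s2 := sum_n_m (fterm m (S p)) 0 m). set (q := INR (S p)). assert (q <> 0) by (apply not_0_INR; lia). unfold plus; simpl. unfold fterm. simpl zeta_star. field.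
  repeat split; auto; try apply fact_nz; apply pow_nonzero; lra.
- intros j. match goal with |- ?a = ?b => change (@eq R a b) end. unfold fterm. rewrite zeta_S.
  replace (2 * S m - 2 * S j + 1)%nat with (2 * m - 2 * j + 1)%nat by lia.
  replace (2 * S j)%nat with (S (S (2 * j))) by lia. simpl pow. set (q := INR (S p)).
  assert (q <> 0) by (apply not_0_INR; lia). field. repeat split; auto; try apply fact_nz; apply pow_nonzero; lra.
Qed.

Lemma an_S p : an (S p) * INR (2*p+2) = INR (2*p+1) * an p.
Proof.
unfold an, Binomial.C.
replace (2 * S p - S p)%nat with (S p) by lia. replace (2 * p - p)%nat with p by lia.
replace (2 * S p)%nat with (S (S (2 * p))) by lia.
rewrite !fact_simpl. rewrite !mult_INR. simpl pow.
pose proof (fact_nz p). pose proof (fact_nz (2*p)).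
replace (INR (2*p+2)) with (INR (S (S (2*p)))) by (f_equal; lia).
replace (INR (2*p+1)) with (INR (S (2*p))) by (f_equal; lia).
rewrite !S_INR. rewrite mult_INR. simpl INR.
field. repeat split; try lra; try (apply pow_nonzero; lra).
pose proof (pos_INR p). lra.
Qed.

Lemma I_m0 m : Ii m 0 = G m 0.
Proof.
rewrite base0. unfold G. rewrite Ss_0. unfold an, Binomial.C. simpl (2*0)%nat. simpl pow.
replace (2*m+1)%nat with (S (2*m)) by lia. rewrite fact_simpl, mult_INR.
pose proof (fact_nz (2*m)). assert (INR (S (2*m)) <> 0) by (apply not_0_INR; lia).
simpl fact. simpl INR. field. auto.
Qed.

Lemma main m n : Ii m n = G m n.
Proof.
revert n. induction m as [|m IHm]; intros n; induction n as [|p IHn].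
- apply I_m0.
- pose proof (wallisB p) as W. pose proof (an_S p) as HA.
  unfold G in *. rewrite !Ss_n0 in *. rewrite IHn in W.
  assert (INR (2*p+2) <> 0) by (apply not_0_INR; lia).
  apply (Rmult_eq_reg_l (INR (2*p+2))); [|auto].
  simpl (2*0)%nat in *. simpl fact in *. simpl INR in *. replace (INR (p + (p + 0) + 2) * (1 * an (S p) * (PI / 2))) with (an (S p) * INR (p + (p + 0) + 2) * (PI/2)) by ring. rewrite HA. lra.
- apply I_m0.
- pose proof (recB m p) as W. rewrite IHm, IHn in W.
  pose proof (an_S p) as HA.
  assert (Hc : INR (4*(p+1)*(p+1)) <> 0) by (apply not_0_INR; lia).
  apply (Rmult_eq_reg_l (INR (4*(p+1)*(p+1)))); [|auto].
  assert (E : INR (4 * (p + 1) * (p + 1)) * G (S m) (S p) =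
     INR ((2*p+2)*(2*p+1)) * G (S m) p - INR ((2*m+1)*(2*m+2)) * G m (S p)).
  { unfold G. rewrite recA.
    replace (2 * S m)%nat with (S (S (2*m))) by lia. rewrite !fact_simpl, !mult_INR.
    assert (INR (2*p+1) <> 0) by (apply not_0_INR; lia).
    assert (an p = an (S p) * INR (2*p+2) / INR (2*p+1)) as Ep by (rewrite HA; field; auto).
    rewrite Ep. set (F := INR (fact (2*m))). repeat rewrite ?S_INR, ?plus_INR, ?mult_INR. simpl INR.
    pose proof (pos_INR p). pose proof (pos_INR m).
    field. repeat split; lra. }
  lra.
Qed.

Theorem mainTheorem11 (m n : nat) (hn : (1 <= n)%nat) :
  RInt (fun x => x ^ (2 * m) * cos x ^ (2 * n)) 0 (PI / 2)
  = INR (fact (2 * m)) * (Binomial.C (2 * n) n / 4 ^ n) *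
    sum_n_m (fun j =>
      (-1) ^ j * zeta_star n j
      / (2 ^ (2 * j) * INR (fact (2 * m - 2 * j + 1)))
      * (PI / 2) ^ (2 * m - 2 * j + 1)) 0 m.
Proof. exact (main m n). Qed.
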